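(* Let $K\subset\mathbb{R}^3$ be a convex body with $K=-K$, let $L=\mathrm{lin}(\{e_1,e_2\})$, and let $r>0$ be such that $r\,\mathrm{B}_{2,L}\subset K|L$. Then there exist points $p_1,p_2,p_3\in L$ such that $\mathrm{conv}(\{\pm p_i:i=1,2,3\})$ is a regular hexagon inscribed in $r\,\mathrm{B}_{2,L}$ (all its vertices lie on the circle of radius $r$ centered at $0$ in $L$), and points $q_1,q_2,q_3\in K$ with $-q_1,-q_2,-q_3\in K$, such that $q_i|L=p_i$ (hence $(-q_i)|L=-p_i$) for $i=1,2,3$, and $\dim\mathrm{conv}(\{\pm q_i:i=1,2,3\})=2$.
   Context: A convex body is a compact convex subset of $\mathbb{R}^3$. $e_1,e_2,e_3$ are the canonical unit vectors, $\mathrm{B}_{2,L}=\mathrm{B}_3\cap L$ is the Euclidean unit disc of $L$, and $K|L$ is the orthogonal projection of $K$ onto $L$. *)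

(* Defs.v *)
From HB Require Import structures.
From mathcomp Require Import all_boot all_order all_algebra.
From mathcomp Require Import all_classical all_reals all_analysis.
Set Implicit Arguments. Unset Strict Implicit. Unset Printing Implicit Defensive.
Import Order.TTheory GRing.Theory Num.Theory.
Local Open Scope classical_set_scope.
Local Open Scope ring_scope.

Definition convex3 {R : realType} (K : set 'rV[R]_3) : Prop :=
  forall x y, K x -> K y -> forall t : R, 0 <= t <= 1 -> K (t *: x + (1 - t) *: y).

Definition convex_body {R : realType} (K : set 'rV[R]_3) : Prop :=
  @compact 'rV[R^o]_3 K /\ convex3 K.

(* L = lin{e1,e2}: the third coordinate vanishes *)
Definition inL {R : realType} (x : 'rV[R]_3) : Prop := x ord0 2%:R = 0.

Definition projL {R : realType} (x : 'rV[R]_3) : 'rV[R]_3 :=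
  \row_(j < 3) (if j == 2%:R :> 'I_3 then 0 else x ord0 j).

Definition rdisc {R : realType} (r : R) : set 'rV[R]_3 :=
  [set x | inL x /\ (x ord0 0) ^+ 2 + (x ord0 1) ^+ 2 <= r ^+ 2].

Definition projKL {R : realType} (K : set 'rV[R]_3) : set 'rV[R]_3 := projL @` K.

Definition hexv {R : realType} (r th : R) (k : nat) : 'rV[R]_3 :=
  \row_(j < 3) [:: r * cos (th + k%:R * pi / 3); r * sin (th + k%:R * pi / 3); 0]`_j.

(* conv{±p1,±p2,±p3} is a regular hexagon inscribed in r B_{2,L}: the six points
   ±p_i are exactly the vertices of such a hexagon *)
Definition reg_hexagon_inscribed {R : realType} (r : R) (p1 p2 p3 : 'rV[R]_3) : Prop :=
  exists th : R, forall x : 'rV[R]_3,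
    (x = p1 \/ x = - p1 \/ x = p2 \/ x = - p2 \/ x = p3 \/ x = - p3) <->
    exists k : 'I_6, x = hexv r th k.

(* dimension of the affine hull (= dimension of the convex hull) of a finite
   point set: rank of the differences with the first point *)
Definition affdim {R : realType} (s : seq 'rV[R]_3) : nat :=
  match s with
  | [::] => 0
  | x :: t => \rank (\matrix_(i < size t) (nth 0 t i - x))
  end.

(* Main.v *)
Require Import Defs.
From HB Require Import structures.
From mathcomp Require Import all_boot all_order all_algebra.
From mathcomp Require Import all_classical all_reals all_analysis.
From mathcomp Require Import ring lra.
Import Order.TTheory GRing.Theory Num.Theory.
Local Open Scope classical_set_scope.
Local Open Scope ring_scope.
Module Helpers.
Import numFieldNormedType.Exports.
Local Open Scope classical_set_scope.
Local Open Scope ring_scope.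

Section Trig.
Variable R : realType.

Lemma poly3 (c : R) : (c + 1) * (2 * c - 1) ^+ 2 = 4 * c ^+ 3 - 3 * c + 1.
Proof. ring. Qed.
Lemma poly3b (c s: R) : s ^+ 2 = 1 - c ^+ 2 ->
  (c * c - s * s) * c - (s * c + c * s) * s = 4 * c ^+ 3 - 3 * c.
Proof.
move=> h; rewrite (_ : (c*c - s*s)*c - (s*c+c*s)*s = c^+3 - 3*c*(s^+2)); last by ring.
rewrite h; ring.
Qed.
Lemma cos_pi3 : cos (pi / 3 : R) = 1 / 2.
Proof.
set c := cos (pi / 3 : R); set s := sin (pi / 3 : R).
have hpi : (pi : R) = pi / 3 + pi / 3 + pi / 3 by field.
have e : cos (pi : R) = -1 by rewrite cospi.
rewrite hpi !cosD !sinD -/c -/s in e.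
have hs : s ^+ 2 = 1 - c ^+ 2 by rewrite -(cos2Dsin2 (pi / 3)) -/c -/s; ring.
have cpos : 0 < c.
  apply: cos_gt0_pihalf; have hp := pi_gt0 R; apply/andP; split; lra.
clearbody c s.
have : (c + 1) * (2 * c - 1) ^+ 2 = 0.
  by rewrite poly3 -(@poly3b c s hs) e addNr.
move/eqP; rewrite mulf_eq0 => /orP[]; first by move=> /eqP; lra.
rewrite expf_eq0 /= => /eqP; lra.
Qed.

Lemma sin_pi3_gt0 : 0 < sin (pi / 3 : R).
Proof. apply: sin_gt0_pi; have hp := pi_gt0 R; apply/andP; split; lra. Qed.

Lemma sin_pi3_sq : sin (pi / 3 : R) ^+ 2 = 3 / 4.
Proof. have := cos2Dsin2 (pi / 3 : R); rewrite cos_pi3 => h; lra. Qed.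

Lemma cos_hex1 (t : R) : cos (t + pi / 3) = cos t + cos (t + 2 * pi / 3).
Proof.
have -> : 2 * pi / 3 = pi / 3 + pi / 3 :> R by field.
rewrite !cosD !sinD cos_pi3.
have := sin_pi3_sq; move: (sin (pi / 3 : R)) (cos t) (sin t) => s a b h.
rewrite -[s * s]expr2 h; by field.
Qed.

Lemma sin_hex1 (t : R) : sin (t + pi / 3) = sin t + sin (t + 2 * pi / 3).
Proof.
have -> : 2 * pi / 3 = pi / 3 + pi / 3 :> R by field.
rewrite !sinD !cosD cos_pi3.
have := sin_pi3_sq; move: (sin (pi / 3 : R)) (cos t) (sin t) => s a b h.
rewrite -[s * s]expr2 h; by field.
Qed.

Lemma sin_2pi3 : sin (2 * pi / 3 : R) = sin (pi / 3).
Proof.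
have -> : 2 * pi / 3 = pi / 3 + pi / 3 :> R by field.
rewrite sinD cos_pi3; by field.
Qed.

End Trig.

Set Implicit Arguments. Unset Strict Implicit.

Section Hex.
Variable R : realType.
Implicit Types (r t : R) (x y : 'rV[R]_3).

Definition hx r t (k : nat) := r * cos (t + k%:R * pi / 3).
Definition hy r t (k : nat) := r * sin (t + k%:R * pi / 3).

Lemma hexv0 r t k : hexv r t k ord0 0 = hx r t k.
Proof. by rewrite mxE. Qed.
Lemma hexv1 r t k : hexv r t k ord0 1 = hy r t k.
Proof. by rewrite mxE. Qed.
Lemma hexv2 r t k : hexv r t k ord0 2%:R = 0.
Proof. by rewrite mxE. Qed.

Lemma rowE3 x y : x ord0 0 = y ord0 0 -> x ord0 1 = y ord0 1 ->
  x ord0 2%:R = y ord0 2%:R -> x = y.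
Proof.
move=> h0 h1 h2; apply/matrixP => i j; rewrite [i]ord1.
case: j => [[|[|[|//]]] p].
- by rewrite (_ : Ordinal p = 0) //; apply: val_inj.
- by rewrite (_ : Ordinal p = 1) //; apply: val_inj.
- by rewrite (_ : Ordinal p = 2%:R) //; apply: val_inj.
Qed.

Lemma projL0 x : projL x ord0 0 = x ord0 0. Proof. by rewrite mxE. Qed.
Lemma projL1 x : projL x ord0 1 = x ord0 1. Proof. by rewrite mxE. Qed.
Lemma projL2 x : projL x ord0 2%:R = 0. Proof. by rewrite mxE. Qed.

Lemma projL_hexv x r t k :
  projL x = hexv r t k <-> x ord0 0 = hx r t k /\ x ord0 1 = hy r t k.
Proof.
split.
  by move=> h; rewrite -projL0 -projL1 h hexv0 hexv1.
by case=> h0 h1; apply: rowE3; rewrite ?projL0 ?projL1 ?projL2 ?hexv0 ?hexv1 ?hexv2.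
Qed.

Lemma hx_shift r t k : hx r (t + pi / 3) k = hx r t k.+1.
Proof. by rewrite /hx -natr1; congr (_ * cos _); field. Qed.
Lemma hy_shift r t k : hy r (t + pi / 3) k = hy r t k.+1.
Proof. by rewrite /hy -natr1; congr (_ * sin _); field. Qed.

Lemma hx_neg r t k : hx r t (k + 3) = - hx r t k.
Proof.
rewrite /hx natrD (_ : t + (k%:R + 3%:R) * pi / 3 = (t + k%:R * pi / 3) + pi).
  by rewrite cosDpi mulrN.
by field.
Qed.
Lemma hy_neg r t k : hy r t (k + 3) = - hy r t k.
Proof.
rewrite /hy natrD (_ : t + (k%:R + 3%:R) * pi / 3 = (t + k%:R * pi / 3) + pi).
  by rewrite sinDpi mulrN.
by field.
Qed.

Lemma hexv_neg r t k : hexv r t (k + 3) = - hexv r t k.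
Proof.
apply: rowE3; rewrite ?mxE ?hexv0 ?hexv1 ?hexv2 -?/(hx _ _ _) -?/(hy _ _ _).
- by rewrite hx_neg.
- by rewrite hy_neg.
- by rewrite oppr0.
Qed.

Lemma hx_add r t : hx r t 1 = hx r t 0 + hx r t 2.
Proof.
rewrite /hx !mul0r !mul1r addr0 -mulrDr; congr (_ * _).
by rewrite cos_hex1.
Qed.
Lemma hy_add r t : hy r t 1 = hy r t 0 + hy r t 2.
Proof.
rewrite /hy !mul0r !mul1r addr0 -mulrDr; congr (_ * _).
by rewrite sin_hex1.
Qed.

Lemma hexv_disc r t k : rdisc r (hexv r t k).
Proof.
split; first exact: hexv2.
by rewrite hexv0 hexv1 /hx /hy !exprMn -mulrDr cos2Dsin2 mulr1.
Qed.


Lemma hex_det r t : hx r t 0 * hy r t 2 - hy r t 0 * hx r t 2 = r ^+ 2 * sin (pi / 3).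
Proof.
rewrite -sin_2pi3 /hx /hy !mul0r addr0.
have := sinB (t + 2 * pi / 3) t.
rewrite (_ : t + 2 * pi / 3 - t = 2 * pi / 3); last by ring.
move=> ->; ring.
Qed.

Lemma hex_det_neq0 r t : 0 < r -> hx r t 0 * hy r t 2 - hy r t 0 * hx r t 2 != 0.
Proof.
move=> r0; rewrite hex_det; apply/lt0r_neq0.
by apply: mulr_gt0; [exact: exprn_gt0 | exact: sin_pi3_gt0].
Qed.
End Hex.
Arguments hx {R}.
Arguments hy {R}.

Unset Implicit Arguments.

Section Top.
Variable R : realType.
Local Notation V := ('rV[R]_3).
Local Notation T := (R * (V * (V * V)))%type.

Lemma cont_coord (f : T -> V) j : continuous f -> continuous (fun z => f z ord0 j).
Proof.
move=> cf z.
apply: (@cvg_comp _ _ _ f (fun M : V => M ord0 j)); first exact: cf.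
exact: coord_continuous.
Qed.

Lemma cont_hx r k : continuous (fun z : T => hx r z.1 k).
Proof.
move=> z; apply: cvgM; first exact: cvg_cst.
apply: (@cvg_comp _ _ _ (fun z : T => z.1 + k%:R * pi / 3) cos); last exact: continuous_cos.
apply: cvgD; [exact: cvg_fst| exact: cvg_cst].
Qed.

Lemma cont_hy r k : continuous (fun z : T => hy r z.1 k).
Proof.
move=> z; apply: cvgM; first exact: cvg_cst.
apply: (@cvg_comp _ _ _ (fun z : T => z.1 + k%:R * pi / 3) sin); last exact: continuous_sin.
apply: cvgD; [exact: cvg_fst| exact: cvg_cst].
Qed.

Lemma cont_fst (A B : topologicalType) : continuous (@fst A B).
Proof. by move=> z; exact: cvg_fst. Qed.
Lemma cont_snd (A B : topologicalType) : continuous (@snd A B).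
Proof. by move=> z; exact: cvg_snd. Qed.

Lemma cont_s1 : continuous (fun z : T => z.2.1).
Proof.
move=> z; apply: (@cvg_comp _ _ _ snd fst _ (nbhs z.2)); first exact: cvg_snd.
exact: cvg_fst.
Qed.
Lemma cont_s2 : continuous (fun z : T => z.2.2.1).
Proof.
move=> z; apply: (@cvg_comp _ _ _ snd (fun w => w.2.1) _ (nbhs z.2)); first exact: cvg_snd.
apply: (@cvg_comp _ _ _ snd fst _ (nbhs z.2.2)); first exact: cvg_snd.
exact: cvg_fst.
Qed.
Lemma cont_s3 : continuous (fun z : T => z.2.2.2).
Proof.
move=> z; apply: (@cvg_comp _ _ _ snd (fun w => w.2.2) _ (nbhs z.2)); first exact: cvg_snd.
apply: (@cvg_comp _ _ _ snd snd _ (nbhs z.2.2)); first exact: cvg_snd.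
exact: cvg_snd.
Qed.

Lemma closed_eqf (f g : T -> R) : continuous f -> continuous g ->
  closed [set z | f z = g z].
Proof.
move=> cf cg.
have -> : [set z | f z = g z] = (fun z => f z - g z) @^-1` [set 0].
  apply/seteqP; split => z /=; first by move->; rewrite subrr.
  by move/eqP; rewrite subr_eq0 => /eqP.
apply: preimage_closed; last exact: closed_eq.
by move=> z _; apply: cvgB; [exact: cf| exact: cg].
Qed.

Lemma closed_gef (f : T -> R) : continuous f -> closed [set z | 0 <= f z].
Proof.
move=> cf; apply: (@preimage_closed _ _ f [set x | 0 <= x]); last exact: closed_ge.
by move=> z _; exact: cf.
Qed.

Lemma cont_D (s : R) j : continuous (fun z : T => s * (z.2.2.1 ord0 j - z.2.1 ord0 j - z.2.2.2 ord0 j)).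
Proof.
move=> z.
have h1 := @cont_coord (fun z : T => z.2.1) j cont_s1 z.
have h2 := @cont_coord (fun z : T => z.2.2.1) j cont_s2 z.
have h3 := @cont_coord (fun z : T => z.2.2.2) j cont_s3 z.
exact: (cvgM (cvg_cst s) (cvgB (cvgB h2 h1) h3)).
Qed.
End Top.

Set Implicit Arguments. Unset Strict Implicit.

Section Main.
Variable R : realType.
Local Notation V := ('rV[R]_3).
Local Notation T := (R * (V * (V * V)))%type.
Variable K : set V.
Variable r : R.
Hypothesis cK : @compact 'rV[R^o]_3 K.

Definition Cpt (x : V) k t := x ord0 0 = hx r t k /\ x ord0 1 = hy r t k.
Definition Lift t (z : V * (V * V)) :=
  [/\ K z.1, K z.2.1 & K z.2.2] /\ [/\ Cpt z.1 0 t, Cpt z.2.1 1 t & Cpt z.2.2 2 t].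
Definition D (z : V * (V * V)) := z.2.1 ord0 2%:R - z.1 ord0 2%:R - z.2.2 ord0 2%:R.
Definition sg (b : bool) : R := if b then -1 else 1.
Definition CP b := [set z : T | `[0, pi/3]%classic z.1 /\ Lift z.1 z.2 /\ 0 <= sg b * D z.2].
Definition E b := fst @` CP b.

Definition Cl b : set T :=
  [set z : T | z.2.1 ord0 0 = hx r z.1 0] `&` [set z : T | z.2.1 ord0 1 = hy r z.1 0] `&`
  [set z : T | z.2.2.1 ord0 0 = hx r z.1 1] `&` [set z : T | z.2.2.1 ord0 1 = hy r z.1 1] `&`
  [set z : T | z.2.2.2 ord0 0 = hx r z.1 2] `&` [set z : T | z.2.2.2 ord0 1 = hy r z.1 2] `&`
  [set z : T | 0 <= sg b * D z.2].

Lemma closed_Cl b : closed (Cl b).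
Proof.
have c1 := @cont_coord R (fun z : T => z.2.1) _ (@cont_s1 R).
have c2 := @cont_coord R (fun z : T => z.2.2.1) _ (@cont_s2 R).
have c3 := @cont_coord R (fun z : T => z.2.2.2) _ (@cont_s3 R).
apply: closedI; last by apply: closed_gef; exact: cont_D.
apply: closedI; first apply: closedI; first apply: closedI; first apply: closedI;
  first apply: closedI.
- exact: (@closed_eqf R _ _ (c1 0) (@cont_hx R r 0)).
- exact: (@closed_eqf R _ _ (c1 1) (@cont_hy R r 0)).
- exact: (@closed_eqf R _ _ (c2 0) (@cont_hx R r 1)).
- exact: (@closed_eqf R _ _ (c2 1) (@cont_hy R r 1)).
- exact: (@closed_eqf R _ _ (c3 0) (@cont_hx R r 2)).
- exact: (@closed_eqf R _ _ (c3 1) (@cont_hy R r 2)).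
Qed.

Lemma CP_eq b : CP b = (`[0, pi/3]%classic `*` (K `*` (K `*` K))) `&` Cl b.
Proof.
apply/seteqP; split => -[t [a [bb c]]]; rewrite /CP /Cl /Lift /Cpt /=.
  by move=> [h1 [[[h2 h3 h4] [[h5 h6] [h7 h8] [h9 h10]]] h11]]; do !split.
by move=> [[h1 [h2 [h3 h4]]] [[[[[[h5 h6] h7] h8] h9] h10] h11]]; do !split.
Qed.

Lemma compact_CP b : compact (CP b).
Proof.
rewrite CP_eq; apply: compact_closedI; last exact: closed_Cl.
apply: compact_setX; first exact: segment_compact.
by apply: compact_setX => //; apply: compact_setX.
Qed.

Lemma closed_E b : closed (E b).
Proof.
apply: compact_closed; first exact: Rhausdorff.
apply: continuous_compact; last exact: compact_CP.
by apply: continuous_subspaceT; exact: cont_fst.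
Qed.


Hypothesis Hsym : forall x, K x -> K (- x).
Hypothesis Hconv : convex3 K.
Hypothesis Hdisc : rdisc r `<=` projKL K.

Lemma lift_pt t k : exists x, K x /\ Cpt x k t.
Proof.
have [x Kx e] := Hdisc (hexv_disc r t k).
by exists x; split => //; apply/projL_hexv.
Qed.

Lemma lift_ex t : exists z, Lift t z.
Proof.
have [a [Ka ca]] := lift_pt t 0; have [b [Kb cb]] := lift_pt t 1.
have [c [Kc cc]] := lift_pt t 2.
by exists (a, (b, c)); split; split.
Qed.

Lemma lift_shift t a b c : Lift t (a, (b, c)) -> Lift (t + pi / 3) (b, (c, - a)).
Proof.
move=> [[/= Ka Kb Kc] [[/= a0 a1] [/= b0 b1] [/= c0 c1]]].
split; split => //=; rewrite /Cpt ?hx_shift ?hy_shift //.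
- exact: Hsym.
- rewrite !mxE a0 a1 -(hx_neg r t 0) -(hy_neg r t 0); done.
Qed.

Lemma D_shift (a b c : V) : D (b, (c, - a)) = - D (a, (b, c)).
Proof. rewrite /D /= !mxE; ring. Qed.


Lemma E_sub b : E b `<=` `[0, pi/3]%classic.
Proof. by move=> t [z [h _] <-]. Qed.

Lemma E_cover : `[0, pi/3]%classic = E false `|` E true.
Proof.
apply/seteqP; split; last by move=> t [] /E_sub.
move=> t ht; have [z hz] := lift_ex t.
have [hD|hD] := leP 0 (D z).
  by left; exists (t, z) => //; split => //; split => //=; rewrite mul1r.
by right; exists (t, z) => //; split => //; split => //=; rewrite mulN1r oppr_ge0 ltW.
Qed.

Lemma int0 : `[0, pi/3]%classic (0 : R).
Proof. by rewrite /= in_itv /= lexx /=; have := pi_gt0 R; lra. Qed.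
Lemma int1 : `[0, pi/3]%classic (pi / 3 : R).
Proof. by rewrite /= in_itv /= lexx andbT; have := pi_gt0 R; lra. Qed.

Lemma E_nonempty b : E b !=set0.
Proof.
have [[a [bb c]] hz] := lift_ex 0.
have hz' := lift_shift hz; rewrite add0r in hz'.
have hD' := D_shift a bb c.
have [hD|hD] := leP 0 (D (a, (bb, c))); case: b.
- exists (pi / 3); exists (pi / 3, (bb, (c, - a))) => //; split; first exact: int1.
  by split => //=; rewrite hD' mulN1r opprK.
- by exists 0; exists (0, (a, (bb, c))) => //; split; [exact: int0|split => //=; rewrite mul1r].
- by exists 0; exists (0, (a, (bb, c))) => //; split; [exact: int0|split => //=; rewrite mulN1r oppr_ge0 ltW].
- exists (pi / 3); exists (pi / 3, (bb, (c, - a))) => //; split; first exact: int1.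
  by split => //=; rewrite hD' mul1r oppr_ge0 ltW.
Qed.

Lemma E_meet : exists t, E false t /\ E true t.
Proof.
apply: contrapT => hn.
have : ~ connected (`[0, pi/3]%classic : set R).
  apply: (proj2 (connectedPn _)); exists E; split.
  - exact: E_nonempty.
  - exact: E_cover.
  - rewrite /separated -(proj1 (closure_id _) (@closed_E false)) -(proj1 (closure_id _) (@closed_E true)).
    split; apply/seteqP; split => // t [h1 h2]; apply: hn; by exists t.
by apply; exact: segment_connected.
Qed.


Lemma comb_coord (l : R) (x y : V) j :
  (l *: x + (1 - l) *: y) ord0 j = l * x ord0 j + (1 - l) * y ord0 j.
Proof. by rewrite !mxE. Qed.

Lemma Cpt_comb l x y k t : Cpt x k t -> Cpt y k t -> Cpt (l *: x + (1 - l) *: y) k t.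
Proof.
move=> [x0 x1] [y0 y1]; rewrite /Cpt !comb_coord x0 x1 y0 y1.
by split; ring.
Qed.

Lemma conv_step t z0 z1 : Lift t z0 -> Lift t z1 -> 0 <= D z0 -> D z1 <= 0 ->
  exists z, Lift t z /\ D z = 0.
Proof.
case: z0 => a0 [b0 c0]; case: z1 => a1 [b1 c1].
move=> [[/= Ka0 Kb0 Kc0] [/= ca0 cb0 cc0]] [[/= Ka1 Kb1 Kc1] [/= ca1 cb1 cc1]] h0 h1.
have [e|ne] := eqVneq (D (a0, (b0, c0))) 0.
  by exists (a0, (b0, c0)); split => //; split; split.
set d0 := D (a0, (b0, c0)) in h0 ne *; set d1 := D (a1, (b1, c1)) in h1 *.
have d0p : 0 < d0 by rewrite lt_neqAle eq_sym ne.
have dp : 0 < d0 - d1 by lra.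
pose l := - d1 / (d0 - d1).
have l0 : 0 <= l by rewrite /l divr_ge0 // ?oppr_ge0 // ltW.
have l1 : l <= 1 by rewrite /l ler_pdivrMr // mul1r; lra.
have l01 : 0 <= l <= 1 by rewrite l0 l1.
exists (l *: a0 + (1 - l) *: a1, (l *: b0 + (1 - l) *: b1, l *: c0 + (1 - l) *: c1)).
split.
  split; split => /=; try (by apply: Hconv); exact: Cpt_comb.
have -> : D (l *: a0 + (1 - l) *: a1, (l *: b0 + (1 - l) *: b1, l *: c0 + (1 - l) *: c1))
   = l * d0 + (1 - l) * d1.
  by rewrite /d0 /d1 /D /= !comb_coord; ring.
rewrite /l; field; lra.
Qed.

Lemma final_ex : exists t a b c, Lift t (a, (b, c)) /\ D (a, (b, c)) = 0.
Proof.
have [t [[[t0 z0] [h0 [L0 D0]] /= e0] [[t1 z1] [h1 [L1 D1]] /= e1]]] := E_meet.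
subst t0 t1; rewrite /sg mul1r in D0; rewrite /sg mulN1r oppr_ge0 in D1.
have [[a [b c]] [L D]] := conv_step L0 L1 D0 D1.
by exists t, a, b, c.
Qed.

End Main.

Unset Implicit Arguments.

Section Rank.
Variable R : realType.
Local Notation V := ('rV[R]_3).

Lemma det22 (N : 'M[R]_2) : \det N = N 0 0 * N 1 1 - N 0 1 * N 1 0.
Proof.
rewrite (expand_det_row _ 0) !big_ord_recl big_ord0 /cofactor !det_mx11 !mxE /=.
have e1 : lift (0 : 'I_2) (0 : 'I_1) = 1 by apply: val_inj.
have e2 : lift (ord0 : 'I_2) (0 : 'I_1) = 1 by apply: val_inj.
have e3 : lift (ord0 : 'I_2) (ord0 : 'I_1) = 1 by apply: val_inj.
have e4 : lift (1 : 'I_2) (0 : 'I_1) = 0 by apply: val_inj.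
rewrite ?e1 ?e2 ?e3 ?e4 /= ?expr0 ?expr1.
have -> : (ord0 : 'I_2) = 0 by apply: val_inj.
ring.
Qed.


Lemma ord5 (P : 'I_5 -> Prop) : P 0 -> P 1 -> P 2%:R -> P 3%:R -> P 4%:R -> forall i, P i.
Proof.
move=> h0 h1 h2 h3 h4 [[|[|[|[|[|//]]]]] p].
- by rewrite (_ : Ordinal p = 0) //; apply: val_inj.
- by rewrite (_ : Ordinal p = 1) //; apply: val_inj.
- by rewrite (_ : Ordinal p = 2%:R) //; apply: val_inj.
- by rewrite (_ : Ordinal p = 3%:R) //; apply: val_inj.
- by rewrite (_ : Ordinal p = 4%:R) //; apply: val_inj.
Qed.

Lemma rank2 (a c : V) : a ord0 0 * c ord0 1 - a ord0 1 * c ord0 0 != 0 ->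
  affdim [:: a; - a; a + c; - (a + c); c; - c] = 2%N.
Proof.
move=> hdet /=.
set A := \matrix_(i < 5) _.
pose M : 'M[R]_(2, 3) := \matrix_(i < 2, j < 3) (if i == 0 then a ord0 j else c ord0 j).
pose S : 'M[R]_(5, 2) := \matrix_(i < 5, j < 2)
  (nth 0 (nth [::] [:: [:: -2; 0]; [:: 0; 1]; [:: -2; -1]; [:: -1; 1]; [:: -1; -1]] i) j).
have AE : A = S *m M.
  apply/matrixP => i j; rewrite !mxE !big_ord_recl big_ord0 !mxE /=.
  move: i; apply: ord5; rewrite /= ?mxE /=; ring.
pose P : 'M[R]_(3, 2) := \matrix_(i < 3, j < 2) (if (i : nat) == j then 1 else 0).
pose S2 : 'M[R]_(2, 5) := \matrix_(i < 2, j < 5)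
  (nth 0 (nth [::] [:: [:: -1/2; 0; 0; 0; 0]; [:: -1/2; 0; 0; 1; 0]] i) j).
have ME : M = S2 *m A.
  apply/matrixP => i j; rewrite !mxE !big_ord_recl big_ord0 !mxE /=.
  case: i => [[|[|//]] p] /=; rewrite ?mxE /=.
  - by field.
  - by field.
have NE : \det (M *m P) = a ord0 0 * c ord0 1 - a ord0 1 * c ord0 0.
  rewrite det22 !mxE !big_ord_recl !big_ord0 !mxE /=.
  have -> : lift ord0 ord0 = 1 :> 'I_3 by apply: val_inj.
  have -> : ord0 = 0 :> 'I_3 by apply: val_inj.
  ring.
have r2 : \rank (M *m P) = 2%N by apply: mxrank_unit; rewrite unitmxE unitfE NE.
apply/eqP; rewrite eqn_leq; apply/andP; split.
  by rewrite AE; apply: leq_trans (mxrankM_maxr _ _) (rank_leq_row _).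
rewrite -{1}r2; apply: leq_trans (mxrankM_maxl _ _) _; rewrite ME; exact: mxrankM_maxr.
Qed.
End Rank.

End Helpers.
Import Helpers.

Theorem lemma2p1 (R : realType) (K : set 'rV[R]_3) (r : R) :
  convex_body K ->
  (forall x, K x -> K (- x)) ->
  0 < r ->
  rdisc r `<=` projKL K ->
  exists p1 p2 p3 : 'rV[R]_3,
    [/\ inL p1, inL p2, inL p3 & reg_hexagon_inscribed r p1 p2 p3] /\
    exists q1 q2 q3 : 'rV[R]_3,
      [/\ K q1, K q2 & K q3] /\ [/\ K (- q1), K (- q2) & K (- q3)] /\
      [/\ projL q1 = p1, projL q2 = p2 & projL q3 = p3] /\
      affdim [:: q1; - q1; q2; - q2; q3; - q3] = 2%N.
Proof.
move=> [cK Hconv] Hsym r0 Hdisc.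
have [t [a [b [c [[[/= Ka Kb Kc] [/= ca cb cc]] D0]]]]] := final_ex cK Hsym Hconv Hdisc.
exists (hexv r t 0), (hexv r t 1), (hexv r t 2); split.
  split; rewrite /inL ?hexv2 //.
  exists t => x; split.
    case=> [->|[->|[->|[->|[->|->]]]]].
    - by exists (@Ordinal 6 0 isT).
    - by exists (@Ordinal 6 3 isT); rewrite -(hexv_neg r t 0).
    - by exists (@Ordinal 6 1 isT).
    - by exists (@Ordinal 6 4 isT); rewrite -(hexv_neg r t 1).
    - by exists (@Ordinal 6 2 isT).
    - by exists (@Ordinal 6 5 isT); rewrite -(hexv_neg r t 2).
  move=> [[k hk] ->] /=.
  case: k hk => [|[|[|[|[|[|//]]]]]] hk.
  - by left.
  - by right; right; left.
  - by right; right; right; right; left.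
  - by right; left; rewrite (hexv_neg r t 0).
  - by right; right; right; left; rewrite (hexv_neg r t 1).
  - by right; right; right; right; right; rewrite (hexv_neg r t 2).
exists a, b, c; split; first by split.
split; first by split; apply: Hsym.
split; first by split; apply/projL_hexv.
have bE : b = a + c.
  case: ca => a0 a1; case: cb => b0 b1; case: cc => c0 c1.
  apply: rowE3; rewrite !mxE.
  - by rewrite b0 a0 c0 hx_add.
  - by rewrite b1 a1 c1 hy_add.
  - by move: D0; rewrite /D /= => h; apply/eqP; rewrite -subr_eq0 opprD addrA h.
rewrite bE; apply: rank2.
case: ca => -> ->; case: cc => -> ->.
exact: hex_det_neq0.
Qed.
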